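(* Purifying extensions are insufficient for the infimum in squashed entanglement: there exist finite-dimensional bipartite densities $\rho^{AB}$ for which the infimum of $I(A:B|C)_{\tilde\rho}$ over only pure extensions (pure states $\tilde\rho^{ABC}$ with $\operatorname{tr}_C\tilde\rho^{ABC}=\rho^{AB}$) is strictly larger than $E_{sq}(A:B)_\rho$. (Equivalently, the same holds for $I_{sq}(\mathcal{A}:\mathcal{B})_\rho$ with $\mathcal{A}=\mathbb{B}(\mathcal{H}_A)\otimes 1$, $\mathcal{B}=1\otimes\mathbb{B}(\mathcal{H}_B)$, which coincides with $E_{sq}(A:B)_\rho$.)
   Context: $I(A:B|C)_\rho = H(AC)_\rho+H(BC)_\rho-H(C)_\rho-H(ABC)_\rho$ with $H(X)_\rho$ the von Neumann entropy of the reduced density on $X$. Squashed entanglement: $E_{sq}(A:B)_\rho=\inf\{ I(A:B|C)_{\tilde\rho} : \tilde\rho^{ABC},\ \tilde\rho^{AB}=\rho^{AB}\}$, the infimum over all finite-dimensional extensions. *)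

(* Defs.v *)
From HB Require Import structures.
From mathcomp Require Import all_boot all_order all_algebra.
From mathcomp Require Import sesquilinear spectral.
From mathcomp Require Import complex mxtens.
From mathcomp Require Import all_classical all_reals ereal exp.

Set Implicit Arguments.
Unset Strict Implicit.
Unset Printing Implicit Defensive.

Import Order.TTheory GRing.Theory Num.Theory.
Local Open Scope ring_scope.
Local Open Scope sesquilinear_scope.

Section Quantum.
Variable R : realType.
Local Notation C := (R[i]).

Definition adj m n (M : 'M[C]_(m, n)) : 'M[C]_(n, m) := M ^t*.

Definition psd n (M : 'M[C]_n) : Prop :=
  forall v : 'cV[C]_n, 0 <= (adj v *m M *m v) 0 0.

Definition density n (M : 'M[C]_n) : Prop :=
  M \is hermsymmx /\ psd M /\ \tr M = 1.

Definition pure n (M : 'M[C]_n) : Prop :=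
  density M /\ exists v : 'cV[C]_n, M = v *m adj v.

(* von Neumann entropy H(M) = - tr M ln M = - sum_i l_i ln l_i, where the l_i
   are the eigenvalues of the hermitian matrix M (diagonal of its spectral
   decomposition); with the convention 0 ln 0 = 0 (ln 0 = 0 in the library). *)
Definition vN_entropy n (M : 'M[C]_n) : R :=
  - \sum_(i < n) (let l := complex.Re (spectral_diag M 0 i) in l * ln l).

(* Tripartite system A B C, Hilbert space C^dA (x) C^dB (x) C^dC, with
   Kronecker index ordering ((a, b), c). *)
Definition idx3 (dA dB dC : nat) (a : 'I_dA) (b : 'I_dB) (c : 'I_dC)
  : 'I_(dA * dB * dC) := mxtens_index (mxtens_index (a, b), c).

Definition idx2 (dX dY : nat) (x : 'I_dX) (y : 'I_dY) : 'I_(dX * dY) :=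
  mxtens_index (x, y).
Definition fst2 (dX dY : nat) (k : 'I_(dX * dY)) : 'I_dX := (mxtens_unindex k).1.
Definition snd2 (dX dY : nat) (k : 'I_(dX * dY)) : 'I_dY := (mxtens_unindex k).2.

Variables dA dB dC : nat.
Implicit Type M : 'M[C]_(dA * dB * dC).

Definition red_AB M : 'M[C]_(dA * dB) :=
  \matrix_(i, j) \sum_(c < dC)
     M (idx3 (fst2 i) (snd2 i) c) (idx3 (fst2 j) (snd2 j) c).
Definition red_AC M : 'M[C]_(dA * dC) :=
  \matrix_(i, j) \sum_(b < dB)
     M (idx3 (fst2 i) b (snd2 i)) (idx3 (fst2 j) b (snd2 j)).
Definition red_BC M : 'M[C]_(dB * dC) :=
  \matrix_(i, j) \sum_(a < dA)
     M (idx3 a (fst2 i) (snd2 i)) (idx3 a (fst2 j) (snd2 j)).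
Definition red_C M : 'M[C]_dC :=
  \matrix_(i, j) \sum_(a < dA) \sum_(b < dB) M (idx3 a b i) (idx3 a b j).

Definition cmi M : R :=
  vN_entropy (red_AC M) + vN_entropy (red_BC M)
  - vN_entropy (red_C M) - vN_entropy M.

End Quantum.

Local Open Scope classical_set_scope.

Definition squashed_ent (R : realType) (dA dB : nat) (rho : 'M[R[i]]_(dA * dB))
  : \bar R :=
  ereal_inf [set (cmi (projT2 x))%:E | x in
    [set x : {dC : nat & 'M[R[i]]_(dA * dB * dC)} |
       density (projT2 x) /\ red_AB (projT2 x) = rho]].

Definition squashed_ent_pure (R : realType) (dA dB : nat) (rho : 'M[R[i]]_(dA * dB))
  : \bar R :=
  ereal_inf [set (cmi (projT2 x))%:E | x in
    [set x : {dC : nat & 'M[R[i]]_(dA * dB * dC)} |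
       pure (projT2 x) /\ red_AB (projT2 x) = rho]].

(* Main.v *)
Require Import Defs.
From HB Require Import structures.
From mathcomp Require Import all_boot all_order all_algebra.
From mathcomp Require Import sesquilinear spectral complex mxtens.
From mathcomp Require Import all_classical all_reals ereal exp.
Import Order.TTheory GRing.Theory Num.Theory Num.Def.
Local Open Scope ring_scope.
Local Open Scope sesquilinear_scope.
Section S.
Variable R : realType.
Local Notation C := (R[i]).

Lemma Re_sum (I : Type) (r : seq I) (P : pred I) (F : I -> C) :
  complex.Re (\sum_(i <- r | P i) F i) = \sum_(i <- r | P i) complex.Re (F i).
Proof. by apply: (big_morph (@complex.Re R)) => // [[a b] [c d]]. Qed.

Lemma ent_core n (A : 'M[C]_n) (c : C) : A \is normalmx -> A *m A = c *: A ->
  vN_entropy A = - (complex.Re (\tr A) * ln (complex.Re c)).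
Proof.
move=> /orthomx_spectralP hA hAA.
have PU : spectralmx A *m (spectralmx A)^t* = 1%:M := unitarymxP (spectral_unitarymx A).
have PU' := mulmx1C PU.
move: hA; rewrite invmx_unitary ?spectral_unitarymx //.
set P := spectralmx A in PU PU' *; set d := spectral_diag A => hA.
have hD : diag_mx d = P *m A *m P^t*.
  by rewrite [in RHS]hA !mulmxA PU mul1mx -mulmxA PU mulmx1.
have hDD : diag_mx d *m diag_mx d = c *: diag_mx d.
  rewrite hD !mulmxA -(mulmxA _ (P^t*) P) PU' mulmx1 -(mulmxA P A A) hAA.
  by rewrite -scalemxAr -scalemxAl.
have hd i : d 0 i = 0 \/ d 0 i = c.
  have /matrixP /(_ i i) := hDD.
  rewrite mulmx_diag !mxE eqxx !mulr1n => /eqP.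
  rewrite -subr_eq0 -mulrBl mulf_eq0 subr_eq0 => /orP[/eqP|/eqP]; by [right|left].
have htr : \tr A = \sum_i d 0 i.
  by rewrite [in LHS]hA mxtrace_mulC mulmxA PU mul1mx mxtrace_diag.
rewrite /vN_entropy -/d htr Re_sum mulr_suml; congr (- _); apply: eq_bigr => i _ /=.
by case: (hd i) => ->; rewrite // (_ : complex.Re 0 = 0) // !mul0r.
Qed.

Lemma fst2_idx2 m n (x : 'I_m) (y : 'I_n) : fst2 (idx2 x y) = x.
Proof. by rewrite /fst2 /idx2 mxtens_indexK. Qed.
Lemma snd2_idx2 m n (x : 'I_m) (y : 'I_n) : snd2 (idx2 x y) = y.
Proof. by rewrite /snd2 /idx2 mxtens_indexK. Qed.
Lemma idx2_eta m n (k : 'I_(m * n)) : idx2 (fst2 k) (snd2 k) = k.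
Proof. by rewrite /idx2 /fst2 /snd2 -surjective_pairing mxtens_unindexK. Qed.
Lemma idx2_eq m n (x x' : 'I_m) (y y' : 'I_n) :
  (idx2 x y == idx2 x' y') = (x == x') && (y == y').
Proof. by rewrite /idx2 (inj_eq (can_inj (@mxtens_indexK m n))) xpair_eqE. Qed.
Lemma sum_idx2 m n (F : 'I_(m * n) -> C) :
  \sum_(k < m * n) F k = \sum_(a < m) \sum_(b < n) F (idx2 a b).
Proof.
rewrite pair_big /=; rewrite (reindex (fun p : 'I_m * 'I_n => idx2 p.1 p.2)) //=.
exists (fun k => (fst2 k, snd2 k)) => [[a b] _|k _] /=.
  by rewrite fst2_idx2 snd2_idx2.
by rewrite idx2_eta.
Qed.

Lemma sum_if_eq n (a : 'I_n) (x : C) :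
  \sum_(b < n) (if a == b then x else 0) = x.
Proof. by rewrite -big_mkcond /= (big_pred1 a) // => b; rewrite eq_sym. Qed.

Lemma adjK m n (Z : 'M[C]_(m, n)) : Z ^t* ^t* = Z.
Proof. exact: trmxCK. Qed.

Lemma gram_normal m k (Z : 'M[C]_(m, k)) : Z *m Z^t* \is normalmx.
Proof.
apply/normalmxP.
suff -> : (Z *m Z^t*)^t* = Z *m Z^t* by [].
by rewrite trmx_mul map_mxM trmxCK.
Qed.

Lemma gram_ent m k (Z : 'M[C]_(m, k)) (c : C) :
  Z^t* *m Z *m Z^t* = c *: Z^t* ->
  vN_entropy (Z *m Z^t*) = - (complex.Re (\tr (Z^t* *m Z)) * ln (complex.Re c)).
Proof.
move=> h; rewrite -mxtrace_mulC; apply: ent_core; first exact: gram_normal.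
by rewrite !mulmxA -(mulmxA Z (Z^t*) Z) -(mulmxA Z) h scalemxAr.
Qed.

Local Notation half := ((2%:R : C)^-1).

Lemma Re_half : complex.Re half = 2^-1.
Proof. by rewrite -(rmorph_nat (real_complex R)) -fmorphV. Qed.
Lemma conj_half : conjC half = half.
Proof. by rewrite fmorphV /= rmorph_nat. Qed.
Lemma half2 : half *+ 2 = 1.
Proof.
have H (F : numFieldType) : (2%:R : F)^-1 *+ 2 = 1.
  by rewrite -[LHS]mulr_natr mulVf // pnatr_eq0.
exact: H.
Qed.
Lemma half_ge0 : 0 <= half.
Proof. by rewrite invr_ge0 ler0n. Qed.
Lemma ln_half : - (1 * ln (complex.Re half)) = ln (2 : R).
Proof. by rewrite Re_half mul1r lnV ?opprK // posrE ltr0n. Qed.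

Lemma gram_half m (Z : 'M[C]_(m, 2)) : Z^t* *m Z = half *: 1%:M ->
  vN_entropy (Z *m Z^t*) = ln 2.
Proof.
move=> h; rewrite (@gram_ent _ _ Z half); last by rewrite h -scalemxAl mul1mx.
rewrite h mxtraceZ mxtrace1 mulr_natr half2.
exact: ln_half.
Qed.

Lemma diag_ent n (h : 'I_n -> C) : (forall i, h i = 0 \/ h i = half) ->
  \sum_i h i = 1 -> vN_entropy (diag_mx (\row_i h i)) = ln 2.
Proof.
move=> hh hs; rewrite (@ent_core _ _ half).
- by rewrite mxtrace_diag (eq_bigr _ (fun i _ => mxE _ _ _ _)) hs ln_half.
- apply/normalmxP; by rewrite tr_diag_mx map_diag_mx diag_mxC.
apply/matrixP => i j; rewrite mulmx_diag !mxE.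
case: eqP => [->|_]; last by rewrite !mulr0n mulr0.
by rewrite !mulr1n; case: (hh j) => ->; rewrite ?mulr0 ?mul0r.
Qed.

Definition rho0 : 'M[C]_(2 * 2) :=
  diag_mx (\row_k (if fst2 k == snd2 k then half else 0)).

Lemma vvE N (v : 'cV[C]_N) x y : (v *m adj v) x y = v x 0 * conjC (v y 0).
Proof. by rewrite mxE big_ord1 !mxE. Qed.

Lemma rho0E (a b a' b' : 'I_2) : rho0 (idx2 a b) (idx2 a' b') =
  (if a == b then half else 0) *+ ((a == a') && (b == b')).
Proof. by rewrite mxE idx2_eq mxE fst2_idx2 snd2_idx2. Qed.

Lemma rho0_conj k k' : conjC (rho0 k k') = rho0 k k'.
Proof. rewrite !mxE rmorphMn; congr (_ *+ _); case: ifP => _; [exact: conj_half|exact: rmorph0]. Qed.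

Lemma sum_rho (x y : 'I_2) :
  \sum_(z < 2) conjC ((if z == x then half else 0) *+ (x == y)) = half * (x == y)%:R.
Proof.
case: (x =P y) => [_|_] /=; last by rewrite mulr0 big1 // => z _; rewrite mulr0n rmorph0.
rewrite mulr1; under eq_bigr => z _ do rewrite mulr1n fun_if conj_half rmorph0 eq_sym.
exact: sum_if_eq.
Qed.

Lemma tr_rho0 :
  \sum_(a < 2) \sum_(b < 2)
    (\row_k (if fst2 k == snd2 k then half else 0) : 'rV[C]_(2 * 2)) 0 (idx2 a b) = 1.
Proof.
under eq_bigr => a _ do under eq_bigr => b _ do rewrite mxE fst2_idx2 snd2_idx2.
under eq_bigr => a _ do rewrite sum_if_eq.
by rewrite sumr_const card_ord half2.
Qed.

Lemma pure_cmi dC (M : 'M[C]_(2 * 2 * dC)) : pure M -> red_AB M = rho0 ->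
  cmi M = ln 2.
Proof.
move=> [[_ [_ htr]] [v hM]] hAB.
have hv a b a' b' : \sum_(c < dC) v (idx3 a b c) 0 * conjC (v (idx3 a' b' c) 0) =
    rho0 (idx2 a b) (idx2 a' b').
  by rewrite -hAB mxE !fst2_idx2 !snd2_idx2; apply: eq_bigr => c _; rewrite hM vvE.
have hvc a b a' b' : \sum_(c < dC) conjC (v (idx3 a b c) 0) * v (idx3 a' b' c) 0 =
    conjC (rho0 (idx2 a b) (idx2 a' b')).
  by rewrite -hv rmorph_sum; apply: eq_bigr => c _; rewrite rmorphM /= conjCK.
have hABC : vN_entropy M = 0.
  have h1 : v^t* *m v = 1%:M.
    apply/matrixP => i j; rewrite !ord1 [RHS]mxE eqxx mulr1n -htr hM /adj mxtrace_mulC.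
    by rewrite /mxtrace big_ord1.
  rewrite hM /adj (@gram_ent _ _ v 1); last by rewrite h1 mul1mx scale1r.
  by rewrite h1 mxtrace1 (_ : complex.Re 1 = 1) // ln1 mulr0 oppr0.
pose ZA := \matrix_(i < 2 * dC, b < 2) v (idx3 (fst2 i) b (snd2 i)) 0.
have hAC : red_AC M = ZA *m ZA^t*.
  by apply/matrixP => i j; rewrite !mxE; apply: eq_bigr => b _; rewrite hM vvE !mxE.
have hZA : ZA^t* *m ZA = half *: 1%:M.
  apply/matrixP => b b'; rewrite !mxE sum_idx2.
  rewrite (eq_bigr (fun a => conjC (rho0 (idx2 a b) (idx2 a b')))); last first.
    move=> a _; rewrite -hvc; apply: eq_bigr => c _; rewrite !mxE fst2_idx2 snd2_idx2 //.
  by under eq_bigr => a _ do rewrite rho0E eqxx /=; rewrite sum_rho.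
pose ZB := \matrix_(i < 2 * dC, a < 2) v (idx3 a (fst2 i) (snd2 i)) 0.
have hBC : red_BC M = ZB *m ZB^t*.
  by apply/matrixP => i j; rewrite !mxE; apply: eq_bigr => b _; rewrite hM vvE !mxE.
have hZB : ZB^t* *m ZB = half *: 1%:M.
  apply/matrixP => a a'; rewrite !mxE sum_idx2.
  rewrite (eq_bigr (fun b => conjC (rho0 (idx2 a b) (idx2 a' b)))); last first.
    move=> b _; rewrite -hvc; apply: eq_bigr => c _; rewrite !mxE fst2_idx2 snd2_idx2 //.
  under eq_bigr => b _ do rewrite rho0E eqxx andbT eq_sym.
  by rewrite sum_rho.
pose W := \matrix_(c < dC, k < 2 * 2) v (idx3 (fst2 k) (snd2 k) c) 0.
have hC : red_C M = W *m W^t*.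
  apply/matrixP => i j; rewrite !mxE sum_idx2; apply: eq_bigr => a _.
  by apply: eq_bigr => b _; rewrite hM vvE !mxE fst2_idx2 snd2_idx2.
have hW : W^t* *m W = rho0.
  apply/matrixP => k k'.
  have := hvc (fst2 k) (snd2 k) (fst2 k') (snd2 k'); rewrite !idx2_eta rho0_conj => <-.
  by rewrite mxE; apply: eq_bigr => c _; rewrite !mxE.
have hW0 k c : fst2 k != snd2 k -> v (idx3 (fst2 k) (snd2 k) c) 0 = 0.
  move=> hk; have := hv (fst2 k) (snd2 k) (fst2 k) (snd2 k).
  rewrite rho0E !eqxx (negbTE hk) /= mulr1n => /eqP.
  rewrite psumr_eq0 => [/allP /(_ c (mem_index_enum _)) /=|]; last first.
    by move=> i _; rewrite -normCK exprn_ge0.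
  by rewrite -normCK sqrf_eq0 normr_eq0 => /eqP.
have hWW : W^t* *m W *m W^t* = half *: W^t*.
  rewrite hW; apply/matrixP => k c; rewrite mul_diag_mx !mxE.
  case: eqP => hk; first by [].
  by rewrite hW0 ?rmorph0 ?mulr0 //; apply/eqP.
rewrite /cmi hAC hBC hC hABC (@gram_half _ _ hZA) (@gram_half _ _ hZB) (@gram_ent _ _ _ _ hWW).
rewrite hW mxtrace_diag sum_idx2 tr_rho0 (_ : complex.Re 1 = 1) // ln_half.
by rewrite subr0 addrK.
Qed.

Lemma pair2_eq m n (i j : 'I_(m * n)) :
  (fst2 i == fst2 j) && (snd2 i == snd2 j) = (i == j).
Proof. by rewrite -idx2_eq !idx2_eta. Qed.

Lemma diag_density n (h : 'I_n -> C) : (forall i, h i = 0 \/ h i = half) ->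
  \sum_i h i = 1 -> density (diag_mx (\row_i h i)).
Proof.
move=> hh hs; split; [|split].
- apply/is_hermitianmxP; rewrite expr0 scale1r.
  rewrite tr_diag_mx map_diag_mx; congr diag_mx; apply/rowP => i; rewrite !mxE.
  by case: (hh i) => ->; symmetry; [exact: rmorph0|exact: conj_half].
- move=> v; rewrite mxE sumr_ge0 // => j _.
  rewrite mul_mx_diag !mxE -mulrA mulrC -mulrA mulr_ge0 //.
    by case: (hh j) => ->; rewrite ?half_ge0.
  by rewrite mulrC -normCKC exprn_ge0.
by rewrite mxtrace_diag (eq_bigr _ (fun i _ => mxE _ _ _ _)) hs.
Qed.

Definition g3 (a b c : 'I_2) : C := if (a == b) && (b == c) then half else 0.
Definition M0 : 'M[C]_(2 * 2 * 2) :=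
  diag_mx (\row_i g3 (fst2 (fst2 i)) (snd2 (fst2 i)) (snd2 i)).

Lemma M0E a b c a' b' c' : M0 (idx3 a b c) (idx3 a' b' c') =
  g3 a b c *+ [&& a == a', b == b' & c == c'].
Proof.
have e x y z : idx3 x y z = idx2 (idx2 x y) z by [].
by rewrite !e !mxE !idx2_eq !fst2_idx2 !snd2_idx2 andbA.
Qed.

Lemma sum_g3_c a b : \sum_c g3 a b c = if a == b then half else 0.
Proof.
rewrite /g3; case: (a =P b) => [<-|nab] /=; first exact: sum_if_eq.
by rewrite big1.
Qed.
Lemma sum_g3_b a c : \sum_b g3 a b c = if a == c then half else 0.
Proof.
rewrite /g3; case: (a =P c) => [<-|nac] /=.
  by under eq_bigr => b _ do rewrite [b == a]eq_sym andbb; exact: sum_if_eq.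
by apply: big1 => b _; case: (a =P b) => [<-|] //=; case: eqP.
Qed.
Lemma sum_g3_a b c : \sum_a g3 a b c = if b == c then half else 0.
Proof.
rewrite /g3; case: (b =P c) => [_|nbc] /=.
  by under eq_bigr => a _ do rewrite andbT eq_sym; exact: sum_if_eq.
by apply: big1 => a _; rewrite andbF.
Qed.

Lemma hvals n (i : 'I_n) (x y : 'I_2) : (if x == y then half else 0) = 0 \/
  (if x == y then half else 0) = half.
Proof. by case: ifP; [right|left]. Qed.

Lemma red_AB_M0 : red_AB M0 = rho0.
Proof.
apply/matrixP => i j; rewrite !mxE.
under eq_bigr => c _ do rewrite M0E eqxx andbT pair2_eq.
by rewrite sumrMnl sum_g3_c.
Qed.
Lemma red_AC_M0 : red_AC M0 = rho0.
Proof.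
apply/matrixP => i j; rewrite !mxE.
under eq_bigr => b _ do rewrite M0E eqxx /= pair2_eq.
by rewrite sumrMnl sum_g3_b.
Qed.
Lemma red_BC_M0 : red_BC M0 = rho0.
Proof.
apply/matrixP => i j; rewrite !mxE.
under eq_bigr => a _ do rewrite M0E eqxx /= pair2_eq.
by rewrite sumrMnl sum_g3_a.
Qed.
Lemma red_C_M0 : red_C M0 = diag_mx (\row_(i < 2) half).
Proof.
apply/matrixP => i j; rewrite !mxE.
under eq_bigr => a _ do under eq_bigr => b _ do rewrite M0E !eqxx /=.
under eq_bigr => a _ do rewrite sumrMnl.
rewrite sumrMnl exchange_big /=.
under eq_bigr => b _ do rewrite sum_g3_a.
by under eq_bigr => b _ do rewrite eq_sym; rewrite sum_if_eq.
Qed.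

Lemma rho_sum : \sum_(k < 2 * 2) (if fst2 k == snd2 k then half else 0) = 1.
Proof.
rewrite sum_idx2; under eq_bigr => a _ do under eq_bigr => b _ do rewrite fst2_idx2 snd2_idx2.
under eq_bigr => a _ do rewrite sum_if_eq.
by rewrite sumr_const card_ord half2.
Qed.

Lemma rho_vals (k : 'I_(2 * 2)) : (if fst2 k == snd2 k then half else 0) = 0 \/
  (if fst2 k == snd2 k then half else 0) = half.
Proof. by case: ifP; [right|left]. Qed.

Lemma rho0_density : density rho0.
Proof. exact: (@diag_density _ (fun k => if fst2 k == snd2 k then half else 0) rho_vals rho_sum). Qed.

Lemma rho0_ent : vN_entropy rho0 = ln 2.
Proof. exact: (@diag_ent _ (fun k => if fst2 k == snd2 k then half else 0) rho_vals rho_sum). Qed.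

Lemma M0_vals (i : 'I_(2 * 2 * 2)) :
  g3 (fst2 (fst2 i)) (snd2 (fst2 i)) (snd2 i) = 0 \/
  g3 (fst2 (fst2 i)) (snd2 (fst2 i)) (snd2 i) = half.
Proof. by rewrite /g3; case: ifP; [right|left]. Qed.

Lemma M0_sum : \sum_(i < 2 * 2 * 2) g3 (fst2 (fst2 i)) (snd2 (fst2 i)) (snd2 i) = 1.
Proof.
rewrite sum_idx2; under eq_bigr => k _ do under eq_bigr => c _ do rewrite fst2_idx2 snd2_idx2.
rewrite (@sum_idx2 2 2 (fun k => \sum_(c < 2) g3 (fst2 k) (snd2 k) c)).
under eq_bigr => a _ do under eq_bigr => b _ do rewrite fst2_idx2 snd2_idx2 sum_g3_c.
under eq_bigr => a _ do rewrite sum_if_eq.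
by rewrite sumr_const card_ord half2.
Qed.

Lemma M0_density : density M0.
Proof. exact: (@diag_density _ (fun i => g3 (fst2 (fst2 i)) (snd2 (fst2 i)) (snd2 i)) M0_vals M0_sum). Qed.

Lemma M0_cmi : cmi M0 = 0.
Proof.
rewrite /cmi red_AC_M0 red_BC_M0 red_C_M0 rho0_ent (@diag_ent _ (fun i => g3 (fst2 (fst2 i)) (snd2 (fst2 i)) (snd2 i)) M0_vals M0_sum).
rewrite (@diag_ent 2 (fun _ => half)); first by rewrite addrK subrr.
  by move=> _; right.
by rewrite sumr_const card_ord half2.
Qed.
End S.

Local Open Scope ereal_scope.

Theorem corollary3 (R : realType) :
  exists (dA dB : nat) (rho : 'M[R[i]]_(dA * dB)),
    density rho /\ squashed_ent rho < squashed_ent_pure rho.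
Proof.
exists 2%N, 2%N, (rho0 R); split; first exact: rho0_density.
have ln2 : (0 < ln (2 : R))%R by apply: ln_gt0; rewrite ltr1n.
apply: (@le_lt_trans _ _ 0%E).
  apply: ereal_inf_lbound; exists (existT _ 2%N (M0 R)).
    by split; [exact: M0_density | exact: red_AB_M0].
  by rewrite /= M0_cmi.
apply: (@lt_le_trans _ _ (ln (2 : R))%:E); first by rewrite lte_fin.
apply: le_ereal_inf_tmp => y [[dC M] /= [hp hr] <-].
by rewrite (@pure_cmi R _ _ hp hr).
Qed.
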